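(* Let $0<a,b<1$, $r>as$, $s>br$, and consider the autonomous system $(x_{n+1},y_{n+1})=T_{\alpha,\beta}(x_n,y_n)$ with constant $\alpha,\beta\in[0,1)$. (a) If $p_\alpha+q_\beta<4$ and $2-p_\alpha-q_\beta+\frac{p_\alpha q_\beta(1-ab)}{2}>0$, then the positive equilibrium $K=(p,q)$ is locally asymptotically stable. (b) If $\alpha\in(\alpha_*,1)$ and $\beta\in(\beta_*,1)$, where $$\alpha_*=\max\{1-2/p,\,0\},\qquad \beta_*=\max\Big\{1-\frac{2}{q(1-ab)}-\frac{4ab}{q(1-ab)[(1-\alpha)(1-ab)p-2]},\,0\Big\}\in[0,1),$$ then both inequalities in (a) hold, so $K$ is locally asymptotically stable.
   Context: $p=\frac{r-as}{1-ab}$, $q=\frac{s-br}{1-ab}$, $K=(p,q)$. $T_{\alpha,\beta}(x,y)=\big(x[(1-\alpha)e^{r-x-ay}+\alpha],\,y[(1-\beta)e^{s-bx-y}+\beta]\big)$. $p_\alpha=(1-\alpha)p$, $q_\beta=(1-\beta)q$. *)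

(* Defs.v *)
From Stdlib Require Import Reals Lra.
Open Scope R_scope.

Definition pE (a b r s : R) : R := (r - a * s) / (1 - a * b).
Definition qE (a b r s : R) : R := (s - b * r) / (1 - a * b).

Definition T (a b r s alpha beta : R) (z : R * R) : R * R :=
  let (x, y) := z in
  (x * ((1 - alpha) * exp (r - x - a * y) + alpha),
   y * ((1 - beta) * exp (s - b * x - y) + beta)).

Definition dist2 (z w : R * R) : R :=
  sqrt ((fst z - fst w) ^ 2 + (snd z - snd w) ^ 2).

Fixpoint iter (n : nat) (f : R * R -> R * R) (z : R * R) : R * R :=
  match n with O => z | S m => f (iter m f z) end.

Definition loc_asym_stable (f : R * R -> R * R) (K : R * R) : Prop :=
  f K = K /\
  (forall eps, 0 < eps -> exists delta, 0 < delta /\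
     forall z, dist2 z K < delta -> forall n, dist2 (iter n f z) K < eps) /\
  (exists delta, 0 < delta /\
     forall z, dist2 z K < delta ->
       forall eps, 0 < eps -> exists N, forall n, (N <= n)%nat ->
         dist2 (iter n f z) K < eps).

(* Main.v *)
Require Import Defs.
From Stdlib Require Import Reals Lra Psatz.
Open Scope R_scope.

Definition rho2 (z Kp : R * R) : R := (fst z - fst Kp) ^ 2 + (snd z - snd Kp) ^ 2.

Lemma pow_le1 x n : 0 <= x <= 1 -> x ^ n <= 1.
Proof. intros H. induction n; simpl; [lra|]. pose proof (pow_le x n ltac:(lra)). nra. Qed.

Lemma rho2_ge0 z Kp : 0 <= rho2 z Kp.
Proof. unfold rho2. pose proof (pow2_ge_0 (fst z - fst Kp)); pose proof (pow2_ge_0 (snd z - snd Kp)); lra. Qed.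

Lemma dist2_lt z Kp d : 0 < d -> rho2 z Kp < d ^ 2 -> dist2 z Kp < d.
Proof.
  intros Hd H. unfold dist2. rewrite <- (sqrt_pow2 d) by lra.
  apply sqrt_lt_1_alt. split; [unfold rho2; pose proof (pow2_ge_0 (fst z - fst Kp)); pose proof (pow2_ge_0 (snd z - snd Kp)); lra| exact H].
Qed.

Lemma dist2_lt_inv z Kp d : dist2 z Kp < sqrt d -> rho2 z Kp < d.
Proof. intros H. apply sqrt_lt_0_alt. exact H. Qed.

Lemma lyap_stable (f : R * R -> R * R) (Kp : R * R) (W : R -> R -> R)
  (clo chi d2 th : R) :
  f Kp = Kp -> 0 < clo -> clo <= chi -> 0 < d2 -> 0 <= th < 1 ->
  (forall u1 u2, clo * (u1 ^ 2 + u2 ^ 2) <= W u1 u2 <= chi * (u1 ^ 2 + u2 ^ 2)) ->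
  (forall z, rho2 z Kp < d2 ->
     W (fst (f z) - fst Kp) (snd (f z) - snd Kp) <= th * W (fst z - fst Kp) (snd z - snd Kp)) ->
  loc_asym_stable f Kp.
Proof.
  intros HK Hclo Hch Hd2 Hth HW Hstep.
  set (Wz := fun z => W (fst z - fst Kp) (snd z - snd Kp)).
  assert (Wb : forall z, clo * rho2 z Kp <= Wz z <= chi * rho2 z Kp).
  { intros z. apply HW. }
  assert (Wpos : forall z, 0 <= Wz z).
  { intros z. destruct (Wb z) as [H1 H2]. assert (0 <= rho2 z Kp) by apply rho2_ge0.
    apply Rle_trans with (clo * rho2 z Kp); [apply Rmult_le_pos; lra | exact H1]. }
  assert (Inv : forall m2 z, 0 < m2 -> m2 <= d2 -> rho2 z Kp < m2 * clo / chi ->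
     forall n, Wz (iter n f z) <= th ^ n * Wz z /\ rho2 (iter n f z) Kp < m2).
  { intros m2 z Hm Hmd Hz.
    assert (HV0 : Wz z < m2 * clo).
    { destruct (Wb z) as [_ H2].
      assert (chi * rho2 z Kp < chi * (m2 * clo / chi)).
      { apply Rmult_lt_compat_l; lra. }
      replace (chi * (m2 * clo / chi)) with (m2 * clo) in H by (field; lra). lra. }
    induction n as [|n IH].
    - simpl. split; [lra|]. destruct (Wb z). 
      assert (clo * rho2 z Kp < clo * m2) by lra.
      apply Rmult_lt_reg_l in H1; lra.
    - destruct IH as [IH1 IH2]. simpl.
      assert (Hs := Hstep (iter n f z) ltac:(lra)). fold (Wz (f (iter n f z))) in Hs.
      fold (Wz (iter n f z)) in Hs.
      assert (Hthn : 0 <= th ^ n <= 1).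
      { split. apply pow_le; lra. apply pow_le1; lra. }
      assert (H1 : Wz (f (iter n f z)) <= th ^ S n * Wz z).
      { simpl. assert (0 <= Wz (iter n f z)) by apply Wpos. nra. }
      split; [exact H1|].
      destruct (Wb (f (iter n f z))) as [H3 _].
      assert (th ^ S n <= 1). { apply pow_le1; lra. }
      assert (0 <= th ^ S n) by (apply pow_le; lra).
      assert (Hc : clo * rho2 (f (iter n f z)) Kp < clo * m2).
      { assert (0 <= Wz z) by apply Wpos. nra. }
      apply Rmult_lt_reg_l in Hc; lra. }
  split; [exact HK|]. split.
  - intros eps Heps.
    set (m2 := Rmin d2 (eps ^ 2)).
    assert (Hm : 0 < m2) by (apply Rmin_glb_lt; nra).
    exists (sqrt (m2 * clo / chi)). split.
    + apply sqrt_lt_R0. apply Rdiv_lt_0_compat; nra.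
    + intros z Hz n. apply dist2_lt_inv in Hz.
      destruct (Inv m2 z Hm (Rmin_l _ _) Hz n) as [_ H].
      apply dist2_lt; [lra|]. pose proof (Rmin_r d2 (eps^2)). fold m2 in H0. lra.
  - exists (sqrt (d2 * clo / chi)). split.
    + apply sqrt_lt_R0. apply Rdiv_lt_0_compat; nra.
    + intros z Hz eps Heps. apply dist2_lt_inv in Hz.
      assert (HI := Inv d2 z Hd2 (Rle_refl _) Hz).
      assert (Hy : 0 < eps ^ 2 * clo / (Wz z + 1)).
      { apply Rdiv_lt_0_compat. apply Rmult_lt_0_compat; [apply pow_lt|]; lra. pose proof (Wpos z); lra. }
      destruct (pow_lt_1_zero th ltac:(rewrite Rabs_pos_eq; lra) _ Hy) as [N HN].
      exists N. intros n Hn. apply dist2_lt; [lra|].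
      specialize (HN n ltac:(lia)). rewrite Rabs_pos_eq in HN by (apply pow_le; lra).
      destruct (HI n) as [H1 _]. destruct (Wb (iter n f z)) as [H2 _].
      pose proof (Wpos z).
      assert (th ^ n * (Wz z + 1) < eps ^ 2 * clo).
      { apply Rmult_lt_compat_r with (r := Wz z + 1) in HN; [|lra].
        unfold Rdiv in HN. rewrite Rmult_assoc, Rinv_l in HN by lra. lra. }
      assert (0 <= th ^ n) by (apply pow_le; lra).
      assert (Hc : clo * rho2 (iter n f z) Kp < clo * eps ^ 2) by nra.
      apply Rmult_lt_reg_l in Hc; lra.
Qed.
Lemma exp_R t : t <= 1/2 -> 0 <= exp t - 1 - t <= 2 * t^2.
Proof.
  intros Ht. pose proof (exp_ineq1_le t). pose proof (exp_ineq1_le (-t)).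
  split; [lra|].
  assert (He : exp t * exp (-t) = 1) by (rewrite <- exp_plus; replace (t + -t) with 0 by ring; apply exp_0).
  pose proof (exp_pos t).
  assert (exp t * (1 - t) <= 1) by nra.
  assert (0 <= t^2 * (1 - 2*t)) by (pose proof (pow2_ge_0 t); nra).
  nra.
Qed.
Lemma exp_e t : -(1/2) <= t <= 1/2 -> (exp t - 1)^2 <= 4 * t^2.
Proof. intros Ht. pose proof (exp_R t ltac:(lra)).
  destruct (Rle_or_lt 0 t).
  - assert (0 <= exp t - 1 <= 2*t) by nra. nra.
  - assert (2*t <= exp t - 1 <= 0) by nra. nra.
Qed.
Lemma N_bound al c p w v : 0 <= al < 1 -> 0 <= c < 1 -> 0 < p -> w^2 + v^2 <= 1/8 ->
  let t := -(w + c*v) in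
  ((1-al) * (w * (exp t - 1) + p * (exp t - 1 - t)))^2 <= (16 + 32*p^2) * (w^2+v^2)^2.
Proof.
  intros Hal Hc Hp Hr t.
  set (r2 := w^2 + v^2).
  assert (Ht2 : t^2 <= 2 * r2).
  { unfold t, r2. pose proof (pow2_ge_0 (c*w - v)). pose proof (pow2_ge_0 w). pose proof (pow2_ge_0 v).
    assert (E : (-(w+c*v))^2 = (1+c^2)*(w^2+v^2) - (c*w-v)^2) by ring. rewrite E.
    assert (c^2 <= 1) by nra. nra. }
  assert (Hr2 : r2 <= 1/8) by (unfold r2; lra).
  assert (Hw : w^2 <= r2) by (unfold r2; pose proof (pow2_ge_0 v); lra).
  assert (Hr0 : 0 <= r2) by (unfold r2; pose proof (pow2_ge_0 v); pose proof (pow2_ge_0 w); lra).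
  clearbody t r2.
  assert (Ht : -(1/2) <= t <= 1/2).
  { assert (t^2 <= 1/4) by lra. pose proof (pow2_ge_0 (t-1/2)); pose proof (pow2_ge_0 (t+1/2)). split; nra. }
  pose proof (exp_e t Ht) as He. pose proof (exp_R t ltac:(lra)) as HR.
  set (R0 := exp t - 1 - t) in *. set (e := exp t - 1) in *.
  assert (HR2 : R0^2 <= 4 * (t^2)^2).
  { replace (R0^2) with (R0*R0) by ring. replace (4*(t^2)^2) with ((2*t^2)*(2*t^2)) by ring.
    apply Rmult_le_compat; lra. }
  assert (H1 : ((1-al) * (w * e + p * R0))^2 <= (w*e + p*R0)^2).
  { replace (((1-al) * (w * e + p * R0))^2) with ((1-al)^2 * (w*e+p*R0)^2) by ring.
    pose proof (pow2_ge_0 (w*e+p*R0)). assert ((1-al)^2 <= 1) by nra. nra. }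
  assert (H2 : (w*e + p*R0)^2 <= 2*(w^2*e^2) + 2*(p^2*R0^2)).
  { pose proof (pow2_ge_0 (w*e - p*R0)). nra. }
  assert (H3 : w^2*e^2 <= r2 * (4*(2*r2))).
  { apply Rmult_le_compat; try nra. }
  assert (H4 : p^2*R0^2 <= p^2 * (4*(2*r2)^2)).
  { apply Rmult_le_compat_l; [nra|]. assert ((t^2)^2 <= (2*r2)^2).
    { pose proof (pow2_ge_0 t). apply pow_incr; lra. } nra. }
  nra.
Qed.
Lemma Apos k P Q : 0 < k < 1 -> 0 < P -> 0 < Q -> P + Q < 4 ->
  2 - P - Q + P*Q*(1-k)/2 > 0 -> 2 - P - k*Q > 0.
Proof. intros Hk HP HQ HS HG.
  destruct (Rle_or_lt ((1-k)*Q/2 - 1) 0) as [Hc|Hc].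
  - destruct (Rle_or_lt (2 - P - k*Q) 0) as [H|H]; [|lra].
    exfalso.
    assert (E : 2 - P - Q + P*Q*(1-k)/2 = -(1-k)*k*Q^2/2 + (P - (2 - k*Q))*((1-k)*Q/2 - 1)) by field.
    assert (0 <= (P - (2 - k*Q))*(-((1-k)*Q/2 - 1))) by (apply Rmult_le_pos; lra).
    assert (0 < (1-k)*k*Q^2) by (apply Rmult_lt_0_compat; [nra| nra]).
    nra.
  - exfalso.
    assert (E : 2 - P - Q + P*Q*(1-k)/2 = -2 + (1-k)*(4-Q)*Q/2 + (P - (4 - Q))*((1-k)*Q/2 - 1)) by field.
    assert (0 < ((4-Q) - P)*(((1-k)*Q/2 - 1))) by (apply Rmult_lt_0_compat; lra).
    assert ((4-Q)*Q <= 4) by (pose proof (pow2_ge_0 (Q-2)); nra).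
    nra.
Qed.

Lemma qf_lower A B C x y : 0 < A -> 0 < C -> 0 < A*C - B^2 ->
  (A*C - B^2)/(A+C) * (x^2 + y^2) <= A*x^2 + 2*B*x*y + C*y^2.
Proof.
  intros HA HC HD. set (m := (A*C-B^2)/(A+C)).
  assert (Hm1 : A - m = (A^2 + B^2)/(A+C)) by (unfold m; field; lra).
  assert (Hm2 : (A-m)*(C-m) - B^2 = m^2) by (unfold m; field; lra).
  assert (HAm : 0 < A - m). { rewrite Hm1. apply Rdiv_lt_0_compat; nra. }
  assert (0 <= (A-m) * ((A-m)*x^2 + 2*B*x*y + (C-m)*y^2)).
  { replace ((A-m) * ((A-m)*x^2 + 2*B*x*y + (C-m)*y^2)) with
      (((A-m)*x + B*y)^2 + ((A-m)*(C-m) - B^2)*y^2) by ring. rewrite Hm2.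
    pose proof (pow2_ge_0 ((A-m)*x + B*y)). pose proof (pow2_ge_0 (m*y)). nra. }
  assert (0 <= (A-m)*x^2 + 2*B*x*y + (C-m)*y^2).
  { apply Rmult_le_reg_l with (A - m); lra. }
  nra.
Qed.

Lemma sq_split L N ep : 0 < ep -> (L + N)^2 <= (1+ep)*L^2 + (1 + /ep)*N^2.
Proof.
  intros H. assert (0 <= (ep*L - N)^2 / ep) by (unfold Rdiv; apply Rmult_le_pos; [apply pow2_ge_0|left; apply Rinv_0_lt_compat; lra]).
  assert (E : (1+ep)*L^2 + (1 + /ep)*N^2 - (L+N)^2 = (ep*L - N)^2/ep) by (field; lra).
  lra.
Qed.

Lemma core a b r s al be p q :
  0 < a < 1 -> 0 < b < 1 -> 0 <= al < 1 -> 0 <= be < 1 -> 0 < p -> 0 < q ->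
  r = p + a * q -> s = b * p + q ->
  (1 - al) * p + (1 - be) * q < 4 ->
  2 - (1 - al) * p - (1 - be) * q + (1 - al) * p * ((1 - be) * q) * (1 - a * b) / 2 > 0 ->
  loc_asym_stable (T a b r s al be) (p, q).
Proof.
  intros Ha Hb Hal Hbe Hp Hq Hr Hs HS HG.
  set (P := (1 - al) * p) in *. set (Q := (1 - be) * q) in *.
  assert (HP : 0 < P) by (unfold P; nra). assert (HQ : 0 < Q) by (unfold Q; nra).
  set (k := a * b) in *.
  assert (Hk : 0 < k < 1) by (unfold k; split; nra).
  set (A' := b * (2 - P - k * Q)). set (C' := a * (2 - Q - k * P)).
  set (B' := k * (2 - P - Q)).
  assert (HA' : 0 < A'). { unfold A'. pose proof (Apos k P Q Hk HP HQ HS ltac:(lra)). nra. }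
  assert (HC' : 0 < C'). { unfold C'. pose proof (Apos k Q P Hk HQ HP ltac:(lra) ltac:(nra)). nra. }
  assert (HD : 0 < A' * C' - B' ^ 2).
  { assert (E : A' * C' - B' ^ 2 = a * b * (2 * (1 - k) * (2 - P - Q + P * Q * (1 - k) / 2))).
    { unfold A', C', B', k. field. }
    rewrite E. apply Rmult_lt_0_compat; [nra|]. apply Rmult_lt_0_compat; lra. }
  set (kap0 := P * Q * ((A' * C' - B' ^ 2) / (A' + C'))).
  assert (Hkap0 : 0 < kap0).
  { unfold kap0. apply Rmult_lt_0_compat; [nra|]. apply Rdiv_lt_0_compat; lra. }
  set (chi := b * Q + a * P).
  assert (Hchi : 0 < chi) by (unfold chi; nra).
  set (clo := Rmin (b * Q) (a * P)).
  assert (Hclo : 0 < clo) by (unfold clo; apply Rmin_glb_lt; nra).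
  assert (Hclo1 : clo <= b * Q) by apply Rmin_l.
  assert (Hclo2 : clo <= a * P) by apply Rmin_r.
  set (kap := Rmin kap0 chi).
  assert (Hkap : 0 < kap) by (unfold kap; apply Rmin_glb_lt; lra).
  assert (Hkap1 : kap <= kap0) by apply Rmin_l.
  assert (Hkap2 : kap <= chi) by apply Rmin_r.
  set (ep := kap / (2 * chi)).
  assert (Hep : 0 < ep) by (unfold ep; apply Rdiv_lt_0_compat; lra).
  set (CN := b * Q * (16 + 32 * p ^ 2) + a * P * (16 + 32 * q ^ 2)).
  assert (HCN : 0 < CN) by (unfold CN; nra).
  assert (Hiep : 0 < 1 + / ep) by (pose proof (Rinv_0_lt_compat ep Hep); lra).
  set (d2 := Rmin (1/8) (kap / (4 * (1 + / ep) * CN))).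
  assert (Hd2 : 0 < d2).
  { unfold d2. apply Rmin_glb_lt; [lra|]. apply Rdiv_lt_0_compat; [lra|].
    apply Rmult_lt_0_compat; lra. }
  set (th := 1 - kap / (4 * chi)).
  assert (Hth : 0 <= th < 1).
  { unfold th. assert (0 < kap / (4*chi)) by (apply Rdiv_lt_0_compat; lra).
    assert (kap / (4*chi) <= 1/4). { apply Rmult_le_reg_l with (4*chi); [lra|].
      field_simplify; lra. } lra. }
  apply (lyap_stable _ _ (fun u1 u2 => b * Q * u1 ^ 2 + a * P * u2 ^ 2) clo chi d2 th).
  - unfold T. replace (r - p - a * q) with 0 by lra. replace (s - b * p - q) with 0 by lra.
    rewrite exp_0. f_equal; ring.
  - exact Hclo.
  - unfold chi. lra.
  - exact Hd2.
  - exact Hth.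
  - intros u1 u2. pose proof (pow2_ge_0 u1). pose proof (pow2_ge_0 u2). split.
    + nra.
    + unfold chi. nra.
  - intros [x y] Hz. unfold rho2 in Hz. cbn [fst snd] in Hz |- *. unfold T.
    remember (x - p) as u1 eqn:Hu1. remember (y - q) as u2 eqn:Hu2.
    assert (Ex : x = p + u1) by lra. assert (Ey : y = q + u2) by lra.
    rewrite Ex, Ey. clear Ex Ey Hu1 Hu2 x y.
    set (rho := u1 ^ 2 + u2 ^ 2) in *.
    assert (Hrho0 : 0 <= rho) by (unfold rho; pose proof (pow2_ge_0 u1); pose proof (pow2_ge_0 u2); lra).
    assert (Hrho1 : rho <= 1/8) by (pose proof (Rmin_l (1/8) (kap / (4 * (1 + / ep) * CN))) as Hm; fold d2 in Hm; lra).
    assert (Hrho2 : rho <= kap / (4 * (1 + / ep) * CN)) by (pose proof (Rmin_r (1/8) (kap / (4 * (1 + / ep) * CN))) as Hm; fold d2 in Hm; lra).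
    set (t1 := -(u1 + a * u2)). set (t2 := -(u2 + b * u1)).
    replace (r - (p + u1) - a * (q + u2)) with t1 by (unfold t1; lra).
    replace (s - b * (p + u1) - (q + u2)) with t2 by (unfold t2; lra).
    set (N1 := (1 - al) * (u1 * (exp t1 - 1) + p * (exp t1 - 1 - t1))).
    set (N2 := (1 - be) * (u2 * (exp t2 - 1) + q * (exp t2 - 1 - t2))).
    set (L1 := (1 - P) * u1 - a * P * u2). set (L2 := - b * Q * u1 + (1 - Q) * u2).
    assert (F1 : (p + u1) * ((1 - al) * exp t1 + al) - p = L1 + N1).
    { unfold L1, N1, P, t1. ring. }
    assert (F2 : (q + u2) * ((1 - be) * exp t2 + be) - q = L2 + N2).
    { unfold L2, N2, Q, t2. ring. }
    cbn [fst snd]. rewrite F1, F2.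
    assert (HN1 : N1 ^ 2 <= (16 + 32 * p ^ 2) * rho ^ 2).
    { apply (N_bound al a p u1 u2); unfold rho in Hrho1; lra. }
    assert (HN2 : N2 ^ 2 <= (16 + 32 * q ^ 2) * rho ^ 2).
    { replace rho with (u2 ^ 2 + u1 ^ 2) by (unfold rho; ring).
      apply (N_bound be b q u2 u1); unfold rho in Hrho1; lra. }
    set (VU := b * Q * u1 ^ 2 + a * P * u2 ^ 2).
    set (VL := b * Q * L1 ^ 2 + a * P * L2 ^ 2).
    set (VN := b * Q * N1 ^ 2 + a * P * N2 ^ 2).
    assert (Hsplit : b * Q * (L1 + N1) ^ 2 + a * P * (L2 + N2) ^ 2 <= (1 + ep) * VL + (1 + / ep) * VN).
    { pose proof (sq_split L1 N1 ep Hep). pose proof (sq_split L2 N2 ep Hep).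
      assert (0 < b * Q) by nra. assert (0 < a * P) by nra. unfold VL, VN. nra. }
    assert (HGu : VU - VL = P * Q * (A' * u1 ^ 2 + 2 * B' * u1 * u2 + C' * u2 ^ 2)).
    { unfold VU, VL, L1, L2, A', B', C', k. ring. }
    assert (Hqf := qf_lower A' B' C' u1 u2 HA' HC' HD).
    assert (HVL : VL <= VU - kap * rho).
    { assert (kap0 * rho <= P * Q * (A' * u1 ^ 2 + 2 * B' * u1 * u2 + C' * u2 ^ 2)).
      { unfold kap0, rho. rewrite Rmult_assoc. apply Rmult_le_compat_l; [nra|]. exact Hqf. }
      assert (kap * rho <= kap0 * rho) by (apply Rmult_le_compat_r; lra). lra. }
    assert (HVL0 : 0 <= VL) by (unfold VL; pose proof (pow2_ge_0 L1); pose proof (pow2_ge_0 L2); nra).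
    assert (HVU : VU <= chi * rho) by (unfold VU, chi, rho; pose proof (pow2_ge_0 u1); pose proof (pow2_ge_0 u2); nra).
    assert (HVN : VN <= CN * rho ^ 2) by (unfold VN, CN; nra).
    assert (Hepchi : ep * chi = kap / 2) by (unfold ep; field; lra).
    assert (T1 : (1 + ep) * VL <= VU - kap / 2 * rho).
    { assert (ep * VL <= ep * (VU - kap * rho)) by (apply Rmult_le_compat_l; lra).
      assert (ep * (VU - kap * rho) <= ep * VU) by (assert (0 <= ep * kap * rho) by (apply Rmult_le_pos; [nra|lra]); nra).
      assert (ep * VU <= ep * (chi * rho)) by (apply Rmult_le_compat_l; lra).
      nra. }
    assert (T2 : (1 + / ep) * VN <= kap / 4 * rho).
    { assert ((1 + / ep) * VN <= (1 + / ep) * (CN * rho ^ 2)) by (apply Rmult_le_compat_l; lra).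
      assert ((1 + / ep) * CN * rho <= kap / 4).
      { assert (Hx : (1 + / ep) * CN * rho <= (1 + / ep) * CN * (kap / (4 * (1 + / ep) * CN)))
          by (apply Rmult_le_compat_l; [nra|lra]).
        replace ((1 + / ep) * CN * (kap / (4 * (1 + / ep) * CN))) with (kap / 4) in Hx by (field; lra). lra. }
      assert ((1 + / ep) * (CN * rho ^ 2) = ((1 + / ep) * CN * rho) * rho) by ring.
      assert (((1 + / ep) * CN * rho) * rho <= kap / 4 * rho) by (apply Rmult_le_compat_r; lra).
      lra. }
    assert (Hfin : VU - kap / 4 * rho <= th * VU).
    { unfold th. assert (kap / (4 * chi) * VU <= kap / 4 * rho).
      { replace (kap / (4 * chi) * VU) with (kap / 4 * (VU / chi)) by (field; lra).
        apply Rmult_le_compat_l; [lra|]. apply Rmult_le_reg_l with chi; [lra|].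
        replace (chi * (VU / chi)) with VU by (field; lra). lra. }
      lra. }
    fold VU. lra.
Qed.

Theorem mainTheorem5 (a b r s alpha beta : R) :
  0 < a < 1 -> 0 < b < 1 -> r > a * s -> s > b * r ->
  0 <= alpha < 1 -> 0 <= beta < 1 ->
  let p := pE a b r s in
  let q := qE a b r s in
  let palpha := (1 - alpha) * p in
  let qbeta := (1 - beta) * q in
  (* (a) *)
  ((palpha + qbeta < 4 ->
    2 - palpha - qbeta + palpha * qbeta * (1 - a * b) / 2 > 0 ->
    loc_asym_stable (T a b r s alpha beta) (p, q))
  /\
  (* (b) *)
  (let alpha_s := Rmax (1 - 2 / p) 0 in
   let beta_s := Rmax (1 - 2 / (q * (1 - a * b))
                        - 4 * a * b / (q * (1 - a * b) * ((1 - alpha) * (1 - a * b) * p - 2))) 0 in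
   alpha_s < alpha < 1 -> beta_s < beta < 1 ->
   (0 <= beta_s < 1) /\
   palpha + qbeta < 4 /\
   2 - palpha - qbeta + palpha * qbeta * (1 - a * b) / 2 > 0 /\
   loc_asym_stable (T a b r s alpha beta) (p, q))).
Proof.
  intros Ha Hb Hrs Hsr Hal Hbe p q palpha qbeta.
  assert (Hc : 0 < 1 - a * b) by nra.
  assert (Hp : 0 < p) by (unfold p, pE; apply Rdiv_lt_0_compat; lra).
  assert (Hq : 0 < q) by (unfold q, qE; apply Rdiv_lt_0_compat; lra).
  assert (Hr : r = p + a * q) by (unfold p, q, pE, qE; field; lra).
  assert (Hs : s = b * p + q) by (unfold p, q, pE, qE; field; lra).
  assert (PA : palpha + qbeta < 4 ->
    2 - palpha - qbeta + palpha * qbeta * (1 - a * b) / 2 > 0 ->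
    loc_asym_stable (T a b r s alpha beta) (p, q)).
  { intros H1 H2. apply core; auto. }
  split; [exact PA|].
  intros alpha_s beta_s [Has _] [Hbs Hb1].
  assert (HP2 : palpha < 2).
  { assert (1 - 2 / p < alpha) by (pose proof (Rmax_l (1 - 2/p) 0); fold alpha_s in H; lra).
    unfold palpha. assert (1 - alpha < 2 / p) by lra.
    apply Rmult_lt_compat_r with (r := p) in H0; [|lra].
    replace (2 / p * p) with 2 in H0 by (field; lra). lra. }
  set (c := 1 - a * b) in *.
  set (D := (1 - alpha) * c * p - 2) in *.
  assert (HD : D < 0).
  { unfold D. replace ((1 - alpha) * c * p) with (palpha * c) by (unfold palpha; ring).
    assert (0 <= palpha) by (unfold palpha; apply Rmult_le_pos; lra).
    assert (c < 1) by (unfold c; nra).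
    assert (palpha * c <= palpha) by nra. lra. }
  assert (HX : 1 - beta < 2 / (q * c) + 4 * a * b / (q * c * D)).
  { pose proof (Rmax_l (1 - 2 / (q * c) - 4 * a * b / (q * c * D)) 0). fold beta_s in H. lra. }
  assert (HY : 2 * D + 4 * a * b < qbeta * c * D).
  { assert (Hn : 0 < - (q * c * D)) by (assert (0 < q * c) by nra; nra).
    apply Rmult_lt_compat_l with (r := - (q * c * D)) in HX; [|exact Hn].
    replace (- (q * c * D) * (2 / (q * c) + 4 * a * b / (q * c * D))) with (-(2 * D + 4 * a * b)) in HX
      by (field; repeat split; lra).
    unfold qbeta. nra. }
  assert (HDe : D = palpha * c - 2) by (unfold D, palpha; ring).
  assert (Habc : a * b = 1 - c) by (unfold c; ring).
  assert (HY' : 2*(palpha*c - 2) + 4*(1-c) < qbeta*c*(palpha*c-2)).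
  { rewrite <- HDe. replace (4*(1-c)) with (4*a*b) by (rewrite <- Habc; ring). exact HY. }
  clear HY.
  assert (Hpa0 : 0 <= palpha) by (unfold palpha; apply Rmult_le_pos; lra).
  assert (Hqb0 : 0 <= qbeta) by (unfold qbeta; apply Rmult_le_pos; lra).
  assert (Hc1 : c < 1) by (unfold c; nra).
  assert (KEY : qbeta * (2 - palpha * c) < 2 * (2 - palpha)).
  { assert (c * (qbeta * (2 - palpha * c)) < c * (2 * (2 - palpha))) by nra.
    apply Rmult_lt_reg_l in H; lra. }
  assert (HG : 2 - palpha - qbeta + palpha * qbeta * c / 2 > 0) by nra.
  assert (HS : palpha + qbeta < 4).
  { assert (qbeta * (2 - palpha * c) < 2 * (2 - palpha * c)) by nra.
    assert (qbeta < 2). { apply Rmult_lt_reg_r with (2 - palpha * c); nra. } lra. }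
  split; [split; [apply Rmax_r| lra]|].
  split; [exact HS|]. split; [exact HG|]. apply PA; assumption.
Qed.
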